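(* For every integer $n\ge2$, $\gamma_{tr3}(P_2\square P_n)=2n$.
   Context: $P_m$ denotes the directed path with vertex set $\{0,1,\dots,m-1\}$ and arcs $(i,i+1)$ for $0\le i\le m-2$. The Cartesian product $D_1\square D_2$ has vertex set $V(D_1)\times V(D_2)$, with an arc from $(x_1,y_1)$ to $(x_2,y_2)$ iff either $(x_1,x_2)$ is an arc of $D_1$ and $y_1=y_2$, or $x_1=x_2$ and $(y_1,y_2)$ is an arc of $D_2$. For a digraph $D$ and positive integer $k$, a $k$-rainbow dominating function on $D$ is $f:V(D)\to\mathcal P(\{1,\dots,k\})$ such that every $v$ with $f(v)=\emptyset$ satisfies $\bigcup_{u\in N^-(v)}f(u)=\{1,\dots,k\}$, where $N^-(v)$ is the set of in-neighbors of $v$; its weight is $\sum_v|f(v)|$. It is total if additionally the subdigraph induced by $\{v:f(v)\ne\emptyset\}$ has no isolated vertex (a vertex with neither in- nor out-neighbors in it). $\gamma_{trk}(D)$ is the minimum weight of a total $k$-rainbow dominating function. *)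

(* Defs.v *)
From mathcomp Require Import all_boot.
Set Implicit Arguments. Unset Strict Implicit. Unset Printing Implicit Defensive.

(* A digraph on a finite vertex type T is an arc relation [e : rel T];
   [e u v] means (u,v) is an arc. *)

Definition dipath (m : nat) : rel 'I_m := fun i j => val j == (val i).+1.
Arguments dipath m : clear implicits.

Definition cartprod (T1 T2 : finType) (e1 : rel T1) (e2 : rel T2) : rel (T1 * T2) :=
  fun x y => (e1 x.1 y.1 && (x.2 == y.2)) || ((x.1 == y.1) && e2 x.2 y.2).

(* Colours {1,...,k} are represented by 'I_k. *)
Definition rainbow_dom (T : finType) (k : nat) (e : rel T) (f : T -> {set 'I_k}) : bool :=
  [forall v : T, (f v == set0) ==> (\bigcup_(u | e u v) f u == [set: 'I_k])].

Definition total_rainbow_dom (T : finType) (k : nat) (e : rel T) (f : T -> {set 'I_k}) : bool :=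
  rainbow_dom e f &&
  [forall v : T, (f v != set0) ==> [exists u : T, (f u != set0) && (e u v || e v u)]].

Definition rd_weight (T : finType) (k : nat) (f : T -> {set 'I_k}) : nat :=
  \sum_(v : T) #|f v|.

(* gamma_{trk}(D): minimum weight over all total k-rainbow dominating functions.
   (If none exists the value defaults to k * |V|; irrelevant here.) *)
Definition gamma_trk (T : finType) (k : nat) (e : rel T) : nat :=
  \big[minn/(k * #|T|)%N]_(f : {ffun T -> {set 'I_k}} | total_rainbow_dom e f)
     rd_weight f.

(* Main.v *)
Require Import Defs.
From mathcomp Require Import all_boot.
From mathcomp Require Import zify.

Lemma arith (a b : nat -> nat) n :
  1 <= a 0 ->
  (forall j, 0 < j < n -> a j = 0 -> 3 <= a j.-1) ->
  (forall j, j < n -> b j = 0 -> 3 <= a j + b j.-1) ->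
  forall j, j < n -> 2 * j.+1 + (3 <= a j) + (1 < b j) <= \sum_(i < j.+1) (a i + b i).
Proof.
move=> Ha0 Ha Hb; elim=> [|j IH] Hj.
  rewrite big_ord_recr big_ord0 /=.
  have := Hb 0 Hj => /=.
  case: (leqP 3 (a 0)); case: (leqP 2 (b 0)) => /=; lia.
rewrite big_ord_recr /=.
have {IH} := IH (ltnW Hj).
have := Ha j.+1; have := Hb j.+1 Hj => /=.
case: (leqP 3 (a j)); case: (leqP 2 (b j)); case: (leqP 3 (a j.+1));
  case: (leqP 2 (b j.+1)) => /=; lia.
Qed.

Lemma key m (f : {ffun 'I_2 * 'I_m.+2 -> {set 'I_3}}) v (S : {set 'I_3}) :
  rainbow_dom (cartprod (dipath 2) (dipath m.+2)) f -> #|f v| = 0 ->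
  (forall u, cartprod (dipath 2) (dipath m.+2) u v -> f u \subset S) -> 3 <= #|S|.
Proof.
move=> /forallP /(_ v) /implyP H /eqP; rewrite cards_eq0 => /H /eqP HU Hs.
have : \bigcup_(u | cartprod (dipath 2) (dipath m.+2) u v) f u \subset S.
  by apply/bigcupsP.
by rewrite HU => /subset_leq_card; rewrite cardsT card_ord.
Qed.

Lemma lower m (f : {ffun 'I_2 * 'I_m.+2 -> {set 'I_3}}) :
  rainbow_dom (cartprod (dipath 2) (dipath m.+2)) f -> 2 * m.+2 <= rd_weight f.
Proof.
move=> Hf.
pose a j := #|f (ord0, inord j)|.
pose b j := #|f (ord_max, inord j)|.
have Hw : rd_weight f = \sum_(i < m.+2) (a i + b i).
  rewrite /rd_weight.
  transitivity (\sum_(i < 2) \sum_(j < m.+2) #|f (i, j)|).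
    by rewrite pair_bigA; apply: eq_bigr => -[i j].
  rewrite big_ord_recr big_ord_recr big_ord0 /= add0n -big_split /=.
  apply: eq_bigr => i _; rewrite /a /b inord_val; congr (#|f (_, _)| + #|f (_, _)|).
  by apply: val_inj.
rewrite Hw.
have := @arith a b m.+2 _ _ _ m.+1 (ltnSn _).
rewrite /=.
move=> H; apply: leq_trans (H _ _ _); first lia.
- rewrite lt0n; apply/negP => /eqP Ha0.
  suff: 3 <= #|(set0 : {set 'I_3})| by rewrite cards0.
  apply: (@key _ _ _ set0 Hf Ha0) => -[u1 u2].
  rewrite /cartprod /dipath.
  case/orP => /andP [/eqP h1 /eqP h2]; move: h1 h2 => /= h1 h2; first by [].
  by rewrite inordK in h2.
- move=> j /andP [Hj0 Hj] Haj.
  apply: (@key _ _ _ (f (ord0, inord j.-1)) Hf Haj) => -[u1 u2].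
  rewrite /cartprod /dipath.
  case/orP => /andP [/eqP h1 /eqP h2]; move: h1 h2 => /= h1 h2; first by [].
  rewrite inordK // in h2.
  have -> : u1 = ord0 by apply: val_inj; move: h1 => /= ->.
  have -> : u2 = inord j.-1 by apply: val_inj; rewrite /= inordK; lia.
  by [].
- move=> j Hj Hbj.
  apply: leq_trans (@key _ _ _ (f (ord0, inord j) :|: f (ord_max, inord j.-1)) Hf Hbj _) _.
    move=> -[u1 u2]; rewrite /cartprod /dipath.
    case/orP => /andP [/eqP h1 /eqP h2]; move: h1 h2 => /= h1 h2.
      have -> : u1 = ord0 by apply: val_inj; move: h1 => /=; lia.
      rewrite h2; exact: subsetUl.
    rewrite inordK // in h2.
    have -> : u1 = ord_max by apply: val_inj; move: h1 => /= ->.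
    have -> : u2 = inord j.-1 by apply: val_inj; rewrite /= inordK; lia.
    exact: subsetUr.
  by rewrite cardsU leq_subr.
Qed.

Lemma bigmin_le (I : finType) (P : pred I) (F : I -> nat) x0 i :
  P i -> \big[minn/x0]_(j | P j) F j <= F i.
Proof.
move=> Pi; rewrite -big_filter.
have : i \in [seq j <- index_enum I | P j] by rewrite mem_filter Pi mem_index_enum.
elim: [seq _ <- _ | _] => [|x s IH] //; rewrite inE big_cons => /orP [/eqP ->|/IH h].
  exact: geq_minl.
exact: leq_trans (geq_minr _ _) h.
Qed.

Theorem proposition4p5 (n : nat) :
  2 <= n -> gamma_trk 3 (cartprod (dipath 2) (dipath n)) = (2 * n)%N.
Proof.
case: n => [|[|m]] // _.
pose f0 : {ffun 'I_2 * 'I_m.+2 -> {set 'I_3}} := [ffun _ => [set ord0]].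
have Hf0 : total_rainbow_dom (cartprod (dipath 2) (dipath m.+2)) f0.
  apply/andP; split.
    by apply/forallP => v; rewrite ffunE -cards_eq0 cards1.
  apply/forallP => -[v1 v2]; apply/implyP => _; apply/existsP.
  exists (if val v1 == 0 then ord_max else ord0, v2).
  rewrite ffunE -cards_eq0 cards1 /= /cartprod /dipath /= eqxx andbT.
  case: v1 => [[|[|k]] Hk] //=.
apply/eqP; rewrite eqn_leq; apply/andP; split.
  rewrite /gamma_trk; apply: leq_trans (@bigmin_le _ _ _ _ f0 Hf0) _.
  rewrite /rd_weight (eq_bigr (fun _ => 1)); last by move=> i _; rewrite ffunE cards1.
  by rewrite sum1_card card_prod !card_ord.
rewrite /gamma_trk; apply: (big_ind (fun x => 2 * m.+2 <= x)).
- rewrite card_prod !card_ord; lia.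
- by move=> x y Hx Hy; rewrite leq_min Hx Hy.
- by move=> g /andP [Hg _]; apply: lower.
Qed.
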